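(* Let $\lambda>0$, $\mathbf{A}\in\mathbb{R}^{m\times n}$ with columns $\mathbf{a}_1,\dots,\mathbf{a}_n$, let $f:\mathbb{R}^m\to\mathbb{R}\cup\{+\infty\}$, and let $h:\mathbb{R}\to\mathbb{R}\cup\{+\infty\}$ be proper, closed and convex with $0\in\mathrm{dom}(h)$, $h(0)=0$, and $0$ an accumulation point of $\mathrm{dom}(h)$. Let $\nu=(\mathcal{S}_0,\mathcal{S}_1,\mathcal{S}_\bullet)$ and $\nu'=(\mathcal{S}_0',\mathcal{S}_1',\mathcal{S}_\bullet')$ be partitions of $\{1,\dots,n\}$ such that $\mathcal{S}_0\subseteq\mathcal{S}_0'$, $\mathcal{S}_1\subseteq\mathcal{S}_1'$ and $(\mathcal{S}_0'\setminus\mathcal{S}_0)\cup(\mathcal{S}_1'\setminus\mathcal{S}_1)=\{i\}$ for some $i\in\mathcal{S}_\bullet$. Then for all $\mathbf{u}\in\mathbb{R}^m$, $$D^{\nu'}(\mathbf{u})=D^\nu(\mathbf{u})+\begin{cases}\phi_0(\mathbf{a}_i^\top\mathbf{u}) & \text{if } i\in\mathcal{S}_0',\\ \phi_1(\mathbf{a}_i^\top\mathbf{u}) & \text{if } i\in\mathcal{S}_1'.\end{cases}$$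
   Context: $\|\mathbf{x}\|_0$ is the number of nonzero entries of $\mathbf{x}$; $\eta(\text{condition})=0$ if the condition holds and $+\infty$ otherwise; $\omega^*$ denotes the convex conjugate of $\omega$. An accumulation point $0$ of a set $\mathcal{C}\subseteq\mathbb{R}$: every neighborhood of $0$ contains a point of $\mathcal{C}$ other than $0$. For a partition $\nu=(\mathcal{S}_0,\mathcal{S}_1,\mathcal{S}_\bullet)$: $\mathcal{X}^\nu=\{\mathbf{x}\in\mathbb{R}^n: x_j=0\ \forall j\in\mathcal{S}_0,\ x_j\neq0\ \forall j\in\mathcal{S}_1\}$; $g^\nu(\mathbf{x})=\lambda\|\mathbf{x}\|_0+\sum_{j=1}^n h(x_j)+\eta(\mathbf{x}\in\mathcal{X}^\nu)$; $D^\nu(\mathbf{u})=-f^*(-\mathbf{u})-(g^\nu)^*(\mathbf{A}^\top\mathbf{u})$. Also $\phi_0(v)=\max(h^*(v)-\lambda,0)$ and $\phi_1(v)=\max(\lambda-h^*(v),0)$.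
   Formalization: The identity is claimed only for those $\mathbf{u}$ at which not both $D^\nu(\mathbf{u})=-\infty$ and the added term $\phi_0(\mathbf{a}_i^\top\mathbf{u})$ or $\phi_1(\mathbf{a}_i^\top\mathbf{u})$ equals $+\infty$. The statement above fails without it. *)

(* Defs.v *)
From HB Require Import structures.
From mathcomp Require Import all_boot all_order all_algebra.
From mathcomp Require Import all_classical all_reals all_analysis.
Set Implicit Arguments. Unset Strict Implicit. Unset Printing Implicit Defensive.
Import Order.TTheory GRing.Theory Num.Theory.
Import numFieldTopology.Exports.
Local Open Scope ring_scope.
Local Open Scope ereal_scope.

Section Defs.
Variable R : realType.

Local Open Scope classical_set_scope.
Definition edom {T : Type} (F : T -> \bar R) : set T := [set x | F x < +oo].

Definition proper_fun {T : Type} (F : T -> \bar R) : Prop :=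
  (forall x, F x != -oo) /\ (exists x, F x < +oo).

Definition econvex (h : R -> \bar R) : Prop :=
  forall x y (t : R), (0 < t < 1)%R ->
    h (t * x + (1 - t) * y)%R <= t%:E * h x + (1 - t)%:E * h y.

Definition conj1 (h : R -> \bar R) (v : R) : \bar R :=
  ereal_sup (range (fun x : R => (v * x)%:E - h x)).

Definition conjV (k : nat) (F : 'cV[R]_k -> \bar R) (y : 'cV[R]_k) : \bar R :=
  ereal_sup (range (fun x : 'cV[R]_k => ((y^T *m x) ord0 ord0)%:E - F x)).

Definition eta (b : bool) : \bar R := if b then 0 else +oo.

Definition l0 (n : nat) (x : 'cV[R]_n) : nat := #|[set j | x j ord0 != 0%R]|.

Local Close Scope classical_set_scope.
Definition is_partition3 (n : nat) (S0 S1 Sb : {set 'I_n}) : Prop :=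
  [/\ [disjoint S0 & S1], [disjoint S0 & Sb], [disjoint S1 & Sb]
    & S0 :|: S1 :|: Sb = [set: 'I_n]].

Definition in_Xnu (n : nat) (S0 S1 : {set 'I_n}) (x : 'cV[R]_n) : bool :=
  [forall j in S0, x j ord0 == 0%R] && [forall j in S1, x j ord0 != 0%R].

Definition gnu (lam : R) (h : R -> \bar R) (n : nat) (S0 S1 : {set 'I_n})
  (x : 'cV[R]_n) : \bar R :=
  (lam * (l0 x)%:R)%:E + (\sum_(j < n) h (x j ord0)) + eta (in_Xnu S0 S1 x).

Definition Dnu (lam : R) (h : R -> \bar R) (m n : nat) (A : 'M[R]_(m, n))
  (f : 'cV[R]_m -> \bar R) (S0 S1 : {set 'I_n}) (u : 'cV[R]_m) : \bar R :=
  - conjV f (- u) - conjV (gnu lam h S0 S1) (A^T *m u).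

Definition phi0 (lam : R) (h : R -> \bar R) (v : R) : \bar R :=
  maxe (conj1 h v - lam%:E) 0.
Definition phi1 (lam : R) (h : R -> \bar R) (v : R) : \bar R :=
  maxe (lam%:E - conj1 h v) 0.

End Defs.

(* Main.v *)
Require Import Defs.
From HB Require Import structures.
From mathcomp Require Import all_boot all_order all_algebra.
From mathcomp Require Import all_classical all_reals all_analysis.
From mathcomp Require Import ring lra.
Import Order.TTheory GRing.Theory Num.Theory.
Import numFieldTopology.Exports.
Local Open Scope ring_scope.
Local Open Scope ereal_scope.

Section H.
Local Notation etaR := (@Defs.eta _).
Variable R : realType.
Implicit Types (a b c S : \bar R).

Lemma addsup_le1 c (B : set (\bar R)) S :
  (forall b, B b -> c + b <= S) -> c + ereal_sup B <= S.
Proof.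
move=> H; case: c H => [r| |] H.
- rewrite -leeBrDl//; apply: ge_ereal_sup => b Bb; rewrite leeBrDl//; exact: H.
- have [->|nB] := eqVneq (ereal_sup B) -oo; first by rewrite addeNy leNye.
  have [b Bb bgt] : exists2 b, B b & -oo < b by apply: ereal_sup_gt; rewrite ltNye.
  have := H b Bb; rewrite addye ?gt_eqF// leye_eq => /eqP ->; exact: leey.
- by rewrite addNye leNye.
Qed.

Lemma addsup_le (A B : set (\bar R)) S :
  (forall a b, A a -> B b -> a + b <= S) -> ereal_sup A + ereal_sup B <= S.
Proof.
move=> H; apply: addsup_le1 => b Bb; rewrite addeC; apply: addsup_le1 => a Aa.
by rewrite addeC; exact: H.
Qed.

Lemma final_arith (a X p : \bar R) : 0 <= p ->
  ~ (a - (X + p) = -oo /\ p = +oo) -> a - X = a - (X + p) + p.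
Proof.
case: p => [p||] //= p0 H.
- case: a H => [a||]; case: X => [x||] //= H.
  all: try (by rewrite -?EFinD -?EFinN -?EFinD; congr EFin; ring).
- case: X H => [x||] H /=.
  + by exfalso; apply: H; split => //; case: a.
  + by case: a H.
  + by case: a H => [a||] H //=; exfalso; apply: H.
Qed.

Variables (h : R -> \bar R) (lam : R).
Hypotheses (hNy : forall x, h x != -oo) (hconv : econvex h) (h0 : h 0%R = 0)
  (hlp : limit_point (edom h) 0%R) (lam0 : (0 < lam)%R).

Lemma keyK (w e : R) : (0 < e)%R -> exists t, t != 0%R /\ (- e)%:E <= (w * t)%:E - h t.
Proof.
move=> e0.
have [t1 [t10 t1d _]] := hlp setT (@filterT _ _ (nbhs_filter (0%R : R))).
rewrite /edom /= in t1d.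
have : h t1 \is a fin_num by rewrite fin_numE hNy lt_eqF.
move=> /fineK ht1; set r1 := fine (h t1) in ht1.
set K := (w * t1 - r1)%R.
set M := (`|K| + 1)%R.
have M0 : (0 < M)%R by rewrite /M; have := normr_ge0 K; lra.
set s := (e / (M + e))%R.
have Me0 : (0 < M + e)%R by lra.
have s0 : (0 < s)%R by rewrite /s divr_gt0.
have sMe : (s * (M + e) = e)%R by rewrite /s divfK // gt_eqF.
have s1 : (s < 1)%R by nra.
exists (s * t1)%R; split; first by rewrite mulf_neq0 // gt_eqF.
have hc := hconv t1 0%R s.
have : (0 < s < 1)%R by rewrite s0 s1.
move=> /hc; rewrite mulr0 addr0 h0 mule0 adde0 -ht1 -EFinM => hle.
apply: (le_trans _ (leeB (lexx _) hle)).
rewrite -EFinB lee_fin.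
have KK : (0 <= s * (K + `|K|))%R.
  by apply: mulr_ge0; [lra | have := ler_norm (- K); rewrite normrN; lra].
rewrite /K /M in KK sMe *.
nra.
Qed.


Lemma geS (w : R) S :
  (forall t, t != 0%R -> (w * t)%:E - h t - lam%:E <= S) -> conj1 h w - lam%:E <= S.
Proof.
move=> HS; rewrite leeBlDr //; apply: ge_ereal_sup => _ [t _ <-].
have [->|t0] := eqVneq t 0%R.
  rewrite mulr0 h0 sube0; apply/lee_subgt0Pr => e e0.
  have [tt [tt0 Htt]] := @keyK w e e0.
  rewrite sub0e; apply: (le_trans Htt); rewrite -leeBlDr //; exact: HS.
by rewrite -leeBlDr //; exact: HS.
Qed.

Definition Q (w : R) (e : R -> \bar R) (t : R) : \bar R :=
  (w * t)%:E - ((lam * (t != 0%R)%:R)%:E + h t) - e t.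

Lemma Q_ne0 w e t : t != 0%R -> Q w e t = (w * t)%:E - h t - lam%:E - e t.
Proof.
move=> t0; rewrite /Q t0 mulr1 oppeD ?fin_num_adde_defr //.
by rewrite addeA (addeAC (w * t)%:E).
Qed.

Lemma Q_0 w e : Q w e 0%R = - e 0%R.
Proof. by rewrite /Q eqxx mulr0 mulr0 h0 adde0 sube0 add0e. Qed.

Lemma L1 w : ereal_sup (range (Q w (fun t => etaR (t != 0%R)))) = conj1 h w - lam%:E.
Proof.
apply/eqP; rewrite eq_le; apply/andP; split.
  apply: ge_ereal_sup => _ [t _ <-].
  have [->|t0] := eqVneq t 0%R; first by rewrite Q_0 /Defs.eta eqxx /= leNye.
  rewrite Q_ne0 // /Defs.eta t0 sube0; apply: leeB => //.
  by apply: ereal_sup_ubound; exists t.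
apply: geS => t t0; apply: ereal_sup_ubound; exists t => //.
by rewrite Q_ne0 // /Defs.eta t0 sube0.
Qed.

Lemma L2 w : ereal_sup (range (Q w (fun t => etaR (t == 0%R)))) = 0.
Proof.
apply/eqP; rewrite eq_le; apply/andP; split.
  apply: ge_ereal_sup => _ [t _ <-].
  have [->|t0] := eqVneq t 0%R; first by rewrite Q_0 /Defs.eta eqxx /= ?oppe0.
  by rewrite Q_ne0 // /Defs.eta (negbTE t0) /= addeNy leNye.
apply: ereal_sup_ubound; exists 0%R => //; rewrite Q_0 /Defs.eta eqxx /=.
by rewrite oppr0.
Qed.

Lemma L3 w : ereal_sup (range (Q w (fun t => 0))) = maxe (conj1 h w - lam%:E) 0.
Proof.
apply/eqP; rewrite eq_le; apply/andP; split.
  apply: ge_ereal_sup => _ [t _ <-].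
  have [->|t0] := eqVneq t 0%R; first by rewrite Q_0 oppe0 le_max lexx orbT.
  rewrite Q_ne0 // sube0 le_max; apply/orP; left; apply: leeB => //.
  by apply: ereal_sup_ubound; exists t.
rewrite ge_max; apply/andP; split.
  apply: geS => t t0; apply: ereal_sup_ubound; exists t => //.
  by rewrite Q_ne0 // sube0.
by apply: ereal_sup_ubound; exists 0%R => //; rewrite Q_0 oppe0.
Qed.
End H.

Section Split.
Variables (R : realType) (n : nat) (lam : R) (h : R -> \bar R) (S0 S1 : {set 'I_n}) (i : 'I_n).
Hypotheses (hNy : forall x, h x != -oo) (h0 : h 0%R = 0) (iS0 : i \notin S0) (iS1 : i \notin S1).

Definition zc (x : 'cV[R]_n) : 'cV[R]_n := \col_j (if j == i then 0%R else x j ord0).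

Lemma dot_split (w x : 'cV[R]_n) :
  ((w^T *m x) ord0 ord0 = (w^T *m zc x) ord0 ord0 + w i ord0 * x i ord0)%R.
Proof.
rewrite !mxE (bigD1 i) //= [in RHS](bigD1 i) //= !mxE eqxx mulr0 add0r addrC.
by congr (_ + _)%R; apply: eq_bigr => j ji; rewrite !mxE (negbTE ji).
Qed.

Lemma l0E (x : 'cV[R]_n) : l0 x = (\sum_j (x j ord0 != 0%R : nat))%N.
Proof. rewrite /l0 -sum1_card big_mkcond; apply: eq_bigr => j _.
case: ifPn => [/set_mem /= Hx | H]; first by rewrite Hx.
case E: (x j ord0 != 0%R) => //; by case/negP: H; apply: mem_set; rewrite /= E. Qed.

Lemma gnu_nNy y : gnu lam h S0 S1 y != -oo.
Proof.
rewrite /gnu !adde_eq_ninfty /= negb_or; apply/andP; split; last first.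
  by rewrite /Defs.eta; case: in_Xnu.
rewrite esum_eqNy; apply/negP => /existsP [j /andP [_ hj]].
by rewrite (negbTE (hNy _)) in hj.
Qed.

Lemma gnu_split x : gnu lam h S0 S1 x =
  gnu lam h S0 S1 (zc x) + ((lam * (x i ord0 != 0%R)%:R)%:E + h (x i ord0)).
Proof.
rewrite /gnu.
have -> : in_Xnu S0 S1 (zc x) = in_Xnu S0 S1 x.
  rewrite /in_Xnu; congr (_ && _); apply: eq_forallb_in => j jS; rewrite mxE ifN //.
    by apply: contraNneq iS0 => <-.
  by apply: contraNneq iS1 => <-.
rewrite !l0E (bigD1 i) //= [in X in _ = X + _](bigD1 i) //=.
rewrite (bigD1 i (P := predT)) //= [in X in _ = X + _](bigD1 i (P := predT)) //=.
rewrite !mxE eqxx h0 eqxx /= add0n add0e.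
have -> : (\sum_(j | j != i) (zc x j ord0 != 0%R : nat) = \sum_(j | j != i) (x j ord0 != 0%R : nat))%N.
  by apply: eq_bigr => j ji; rewrite !mxE (negbTE ji).
have -> : (\sum_(j | j != i) h (zc x j ord0) = \sum_(j | j != i) h (x j ord0)).
  by apply: eq_bigr => j ji; rewrite !mxE (negbTE ji).
rewrite natrD mulrDr EFinD.
by rewrite addeACA [RHS]addeC !addeA.
Qed.

Lemma Nyadd (a b : \bar R) : a != -oo -> b != -oo -> a +? b.
Proof. by case: a; case: b. Qed.

Lemma conj_split (w : 'cV[R]_n) (e : R -> \bar R) (eNy : forall t, e t != -oo) :
  conjV (fun x => gnu lam h S0 S1 x + e (x i ord0)) w =
  ereal_sup (range (fun x => ((w^T *m zc x) ord0 ord0)%:E - gnu lam h S0 S1 (zc x)))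
  + ereal_sup (range (Q R h lam (w i ord0) e)).
Proof.
have term : forall x, ((w^T *m x) ord0 ord0)%:E - (gnu lam h S0 S1 x + e (x i ord0)) =
   (((w^T *m zc x) ord0 ord0)%:E - gnu lam h S0 S1 (zc x)) + Q R h lam (w i ord0) e (x i ord0).
  move=> x; rewrite gnu_split dot_split EFinD /Q.
  have hC : (lam * (x i ord0 != 0%R)%:R)%:E + h (x i ord0) != -oo.
    by rewrite adde_eq_ninfty negb_or hNy.
  rewrite oppeD; last by apply: Nyadd => //; rewrite adde_eq_ninfty negb_or gnu_nNy.
  rewrite oppeD; last by apply: Nyadd => //; exact: gnu_nNy.
  by rewrite !addeA (addeAC ((w^T *m zc x) ord0 ord0)%:E).
rewrite /conjV; apply/eqP; rewrite eq_le; apply/andP; split.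
  apply: ge_ereal_sup => _ [x _ <-]; rewrite term; apply: leeD.
    by apply: ereal_sup_ubound; exists x.
  by apply: ereal_sup_ubound; exists (x i ord0).
apply: addsup_le => _ _ [x1 _ <-] [t _ <-].
pose x : 'cV[R]_n := \col_j (if j == i then t else x1 j ord0).
have zx : zc x = zc x1.
  by apply/matrixP => j k; rewrite !mxE; case: (j == i).
have xi : x i ord0 = t by rewrite mxE eqxx.
apply: ereal_sup_ubound; exists x => //; by rewrite term zx xi.
Qed.
End Split.

Lemma forall_in_ext (I : finType) (A A' : {set I}) (P : pred I) (i : I) (b : bool) :
  (forall j, (j \in A') = (j \in A) || ((j == i) && b)) ->
  [forall j in A', P j] = [forall j in A, P j] && (b ==> P i).
Proof.
move=> HA; apply/forall_inP/andP => [H|[/forall_inP H1 H2] j].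
  split; first by apply/forall_inP => j jA; apply: H; rewrite HA jA.
  by apply/implyP => bb; apply: H; rewrite HA eqxx bb orbT.
rewrite HA => /orP [jA | /andP [/eqP -> bb]]; first exact: H1.
exact: (implyP H2 bb).
Qed.

Lemma max_split (R : realType) (c : \bar R) (lam : R) : c != -oo ->
  maxe (c - lam%:E) 0 = (c - lam%:E) + maxe (lam%:E - c) 0.
Proof.
case: c => [r| |] // _.
  rewrite -!EFinB -!EFin_max -EFinD; congr EFin.
  have [H|H] := @real_leP R (r - lam)%R 0%R (num_real _) (num_real _).
    rewrite max_l; lra.
  rewrite max_r; lra.
by rewrite addye // addeNy maxye maxNye adde0.
Qed.

Theorem lemmaA3 (R : realType) (m n : nat) (lam : R) (A : 'M[R]_(m, n))
  (f : 'cV[R]_m -> \bar R) (h : R -> \bar R)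
  (S0 S1 Sb S0' S1' Sb' : {set 'I_n}) (i : 'I_n) :
  (0 < lam)%R ->
  (forall x, f x != -oo) ->
  proper_fun h -> lower_semicontinuous h -> econvex h ->
  h 0%R = 0 ->
  limit_point (edom h) 0%R ->
  is_partition3 S0 S1 Sb -> is_partition3 S0' S1' Sb' ->
  S0 \subset S0' -> S1 \subset S1' ->
  (S0' :\: S0) :|: (S1' :\: S1) = [set i] -> i \in Sb ->
  forall u : 'cV[R]_m,
    let v := (A^T *m u) i ord0 in
    let phi := if i \in S0' then phi0 lam h v else phi1 lam h v in
    (* the right-hand side D^nu(u) + phi is well defined (not -oo + +oo) *)
    ~ (Dnu lam h A f S0 S1 u = -oo /\ phi = +oo) ->
    Dnu lam h A f S0' S1' u = Dnu lam h A f S0 S1 u + phi.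
Proof.
move=> lam0 _ [hNy _] _ hconv h0 hlp [d01 d0b d1b _] [d01' _ _ _] sub0 sub1 Heq iSb u v phi Hwd.
have iS0 : i \notin S0 by rewrite (disjointFl d0b iSb).
have iS1 : i \notin S1 by rewrite (disjointFl d1b iSb).
have memi j : (j \in (S0' :\: S0) :|: (S1' :\: S1)) = (j == i) by rewrite Heq inE.
have HS0 j : (j \in S0') = (j \in S0) || ((j == i) && (i \in S0')).
  case ji: (j == i); first by move/eqP: ji => ->; rewrite (negbTE iS0).
  rewrite andFb orbF; apply/idP/idP => [jS|jS]; last exact: (fintype.subsetP sub0 j jS).
  apply/negPn/negP => jN; move: (memi j); rewrite ji !inE jN jS /=.
  by [].
have HS1 j : (j \in S1') = (j \in S1) || ((j == i) && (i \in S1')).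
  case ji: (j == i); first by move/eqP: ji => ->; rewrite (negbTE iS1).
  rewrite andFb orbF; apply/idP/idP => [jS|jS]; last exact: (fintype.subsetP sub1 j jS).
  apply/negPn/negP => jN; move: (memi j); rewrite ji !inE jN jS /= orbT.
  by [].
have iS01 : (i \in S1') = ~~ (i \in S0').
  move: (memi i); rewrite eqxx !inE (negbTE iS0) (negbTE iS1) /=.
  case E0: (i \in S0'); case E1: (i \in S1') => //= _.
  by move: (disjointFr d01' E0); rewrite E1.
set w := (A^T *m u).
set cond := fun t : R => if i \in S0' then t == 0%R else t != 0%R.
have gnu' x : gnu lam h S0' S1' x = gnu lam h S0 S1 x + Defs.eta R (cond (x i ord0)).
  rewrite /gnu -!addeA; congr (_ + (_ + _)).
  have -> : in_Xnu S0' S1' x = in_Xnu S0 S1 x && cond (x i ord0).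
    rewrite /in_Xnu (@forall_in_ext _ _ _ _ _ _ HS0) (@forall_in_ext _ _ _ _ _ _ HS1) iS01 /cond.
    by case: (i \in S0'); rewrite /= ?andbT ?andbA // andbAC.
  by rewrite /Defs.eta; case: in_Xnu; case: (cond _); rewrite /= ?adde0 ?add0e.
have Gnu : conjV (gnu lam h S0 S1) w = conjV (fun x => gnu lam h S0 S1 x + (fun _ => 0) (x i ord0)) w.
  by congr conjV; apply/funext => x; rewrite adde0.
have Gnu' : conjV (gnu lam h S0' S1') w = conjV (fun x => gnu lam h S0 S1 x + Defs.eta R (cond (x i ord0))) w.
  by congr conjV; apply/funext => x; rewrite gnu'.
have eNy0 : forall t : R, (fun _ => 0 : \bar R) t != -oo by [].
have eNy1 : forall t : R, Defs.eta R (cond t) != -oo.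
  by move=> t; rewrite /Defs.eta; case: (cond t).
have C0 := @conj_split R n lam h S0 S1 i hNy h0 iS0 iS1 w _ eNy0.
have C1 := @conj_split R n lam h S0 S1 i hNy h0 iS0 iS1 w _ eNy1.
rewrite /Dnu -/w Gnu Gnu' C0 C1 L3 //.
set a := - conjV f (- u).
set Gr := ereal_sup _.
have c0 : 0 <= conj1 h v.
  by apply: ereal_sup_ubound; exists 0%R => //; rewrite mulr0 h0 sube0.
move: Hwd; rewrite /phi /Dnu -/w Gnu C0 L3 // -/a -/Gr.
case iS0': (i \in S0').
  have -> : (fun t => Defs.eta R (cond t)) = (fun t => Defs.eta R (t == 0%R)).
    by apply/funext => t; rewrite /cond iS0'.
  rewrite L2 // adde0 => Hwd.
  by apply: final_arith => //; rewrite /phi0 le_max lexx orbT.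
have -> : (fun t => Defs.eta R (cond t)) = (fun t => Defs.eta R (t != 0%R)).
  by apply/funext => t; rewrite /cond iS0'.
rewrite L1 // max_split; last by rewrite gt_eqF // (lt_le_trans _ c0) ?ltNye.
rewrite addeA => Hwd.
by apply: final_arith => //; rewrite /phi1 le_max lexx orbT.
Qed.
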